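(* Let $n\ge 3$ and let $P(G(n))$ be the power graph of the gyrogroup $G(n)$ (defined in the context). Then $Int(P(G(n)))=Ce(P(G(n)))$ and $Cl(P(G(n)))=P(G(n))$.
   Context: Let $n\ge 3$ be an integer and $m=2^{n-1}$. Let $P(n)=\{0,1,\dots,m-1\}$, $H(n)=\{m,m+1,\dots,2^n-1\}$ and $G(n)=P(n)\cup H(n)$. For $i,j\in G(n)$ let $t,s,k\in P(n)$ be the residues modulo $m$ (taken in $\{0,\dots,m-1\}$) of $i+j$, $i+(\frac m2-1)j$ and $(\frac m2+1)i+(\frac m2-1)j$, respectively, and define $i\oplus j=t$ if $i,j\in P(n)$; $i\oplus j=t+m$ if $i\in P(n),j\in H(n)$; $i\oplus j=s+m$ if $i\in H(n),j\in P(n)$; $i\oplus j=k$ if $i,j\in H(n)$. Then $(G(n),\oplus)$ is a gyrogroup with identity $e=0$. Powers are defined by $a^1=a$, $a^{k+1}=a^k\oplus a$. The power graph $P(G(n))$ is the simple undirected graph with vertex set $G(n)$ in which distinct vertices $u,v$ are adjacent if and only if $u^k=v$ or $v^k=u$ for some positive integer $k$. In a connected graph $G$: a vertex $v$ is a center vertex if its eccentricity equals the radius of $G$, and the center $Ce(G)$ is the subgraph induced by the center vertices; a vertex $v$ is an interior vertex if for every vertex $u\ne v$ there is a vertex $w$ with $d(u,w)=d(u,v)+d(v,w)$, and the interior $Int(G)$ is the subgraph induced by the interior vertices. For a graph $G$ of order $N$, the closure $Cl(G)$ is obtained by repeatedly adding an edge between non-adjacent vertices whose degree sum is at least $N$ until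 no such pair remains. *)

(* Defs.v *)
From Stdlib Require Import ClassicalEpsilon.
From mathcomp Require Import all_boot all_order.
Set Implicit Arguments. Unset Strict Implicit. Unset Printing Implicit Defensive.

Definition pb (P : Prop) : bool :=
  if excluded_middle_informative P then true else false.

(* Operation on naturals, with m = 2^(n-1), P(n) = [0,m), H(n) = [m,2^n). *)
Definition opnat (n i j : nat) : nat :=
  let m := 2 ^ n.-1 in
  if i < m then
    if j < m then (i + j) %% m
    else (i + j) %% m + m
  else
    if j < m then (i + (m %/ 2 - 1) * j) %% m + m
    else ((m %/ 2 + 1) * i + (m %/ 2 - 1) * j) %% m.

Definition Gn (n : nat) := 'I_(2 ^ n).

(* i (+) j; insubd only acts as a default when the value were out of range,
   which never happens for n >= 3. *)
Definition gop (n : nat) (i j : Gn n) : Gn n := insubd i (opnat n i j).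

(* a^1 = a, a^(k+1) = a^k (+) a  (meaningful for k >= 1). *)
Definition gpow (n : nat) (a : Gn n) (k : nat) : Gn n :=
  iter k.-1 (fun x => gop x a) a.

Definition power_adj (n : nat) : rel (Gn n) :=
  fun u v => (u != v) &&
    pb (exists k, 0 < k /\ (gpow u k = v \/ gpow v k = u)).

Section Graph.
Variable T : finType.
Variable g : rel T.

Fixpoint walkb (k : nat) (u v : T) : bool :=
  if k is k'.+1 then [exists w, g u w && walkb k' w v] else u == v.

(* Distance: least k with a walk of length k (a shortest walk has length
   < #|T|); equals #|T| if v is unreachable from u. *)
Definition dist (u v : T) : nat := find (fun k => walkb k u v) (iota 0 #|T|).

Definition ecc (v : T) : nat := \max_(u : T) dist v u.

Definition radius : nat := \big[minn/#|T|]_(v : T) ecc v.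

Definition center_set : {set T} := [set v | ecc v == radius].

Definition interior_set : {set T} :=
  [set v | [forall u, (u != v) ==>
     [exists w, (w != v) && (dist u w == dist u v + dist v w)]]].

Definition deg (u : T) : nat := #|[set v | g u v]|.

End Graph.

Definition add_edge (T : finType) (g : rel T) (u v : T) : rel T :=
  fun x y => [|| g x y, (x == u) && (y == v) | (x == v) && (y == u)].

Definition closure_pair (T : finType) (g : rel T) (u v : T) : bool :=
  [&& u != v, ~~ g u v & #|T| <= deg g u + deg g v].

(* closure_seq g h : h arises from g by repeatedly adding an edge between a
   closure pair until no closure pair remains (Bondy--Chvatal closure). *)
Inductive closure_seq (T : finType) : rel T -> rel T -> Prop :=
  | cl_stop (g h : rel T) :
      (forall u v, ~~ closure_pair g u v) -> h =2 g -> closure_seq g h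
  | cl_step (g h : rel T) (u v : T) :
      closure_pair g u v -> closure_seq (add_edge g u v) h -> closure_seq g h.

(* Main.v *)
Require Import Defs.
From mathcomp Require Import all_boot all_order.
From mathcomp Require Import zify.
From Stdlib Require Import ClassicalEpsilon.
Set Implicit Arguments. Unset Strict Implicit. Unset Printing Implicit Defensive.

Lemma pbP (P : Prop) : reflect P (pb P).
Proof. rewrite /pb; case: excluded_middle_informative => h; constructor => //. Qed.

Lemma pb_eq (P Q : Prop) : (P <-> Q) -> pb P = pb Q.
Proof. move=> [h1 h2]; apply/idP/idP => /pbP H; apply/pbP; auto. Qed.

Lemma walkb1 (T : finType) (g : rel T) u v : walkb g 1 u v = g u v.
Proof.
apply/existsP/idP => [[w /andP [h /eqP <-]] //| h]; exists v; by rewrite h eqxx.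
Qed.

Lemma dist_small (T : finType) (g : rel T) (H3 : 2 < #|T|)
  (Hw : forall u v, u != v -> ~~ g u v -> walkb g 2 u v) u v :
  dist g u v = if u == v then 0 else if g u v then 1 else 2.
Proof.
have [N EN] : exists N, #|T| = N.+3 by exists (#|T| - 3); lia.
rewrite /dist EN /= -/(walkb g 1 u v) walkb1.
case: eqP => [//|/eqP ne]; case: ifP => // hg.
move: (Hw u v ne); rewrite hg /= => /(_ isT) H2.
by rewrite H2.
Qed.

Lemma bigmin_le (T : finType) (F : T -> nat) x0 a : \big[minn/x0]_(i : T) F i <= F a.
Proof.
have : a \in index_enum T by rewrite mem_index_enum.
elim: (index_enum T) => [//|b s IH]; rewrite big_cons in_cons => /orP [/eqP ->|/IH H].
  exact: geq_minl.
exact: leq_trans (geq_minr _ _) H.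
Qed.

Lemma bigmin_ge (T : finType) (F : T -> nat) x0 c :
  c <= x0 -> (forall i, c <= F i) -> c <= \big[minn/x0]_(i : T) F i.
Proof.
move=> h0 hF; elim/big_ind: _ => // x y hx hy; rewrite leq_min hx hy //.
Qed.

Definition mm (n : nat) := 2 ^ n.-1.

Lemma mm_facts n : 3 <= n -> [/\ 2 ^ n = mm n * 2, 4 <= mm n & mm n %/ 2 * 2 = mm n].
Proof.
move=> hn; rewrite /mm; case: n hn => [|[|[|k]]] //= _.
rewrite !expnS; split; lia.
Qed.

Lemma opnat_lt n i j : 3 <= n -> opnat n i j < 2 ^ n.
Proof.
move=> /mm_facts [E h4 _]; rewrite E /opnat -/(mm n).
have h0 : 0 < mm n by lia.
have := ltn_pmod i h0; have := ltn_pmod (i+j) h0;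
have := ltn_pmod (i + (mm n %/ 2 - 1) * j) h0;
have := ltn_pmod ((mm n %/ 2 + 1) * i + (mm n %/ 2 - 1) * j) h0.
case: ifP; case: ifP; lia.
Qed.

Lemma val_gop n (hn : 3 <= n) (i j : Gn n) : val (gop i j) = opnat n i j.
Proof. by rewrite /gop val_insubd opnat_lt. Qed.

Definition zz n : Gn n := Ordinal (expn_gt0 2 n).

Lemma gpow_ind n (Q : pred (Gn n)) a : Q a -> (forall x, Q x -> Q (gop x a)) ->
  forall k, Q (gpow a k).
Proof. move=> h0 hs k; rewrite /gpow; elim: k.-1 => //= k' IH; exact: hs. Qed.

Lemma gpowS n (a : Gn n) k : 0 < k -> gpow a k.+1 = gop (gpow a k) a.
Proof. by case: k. Qed.

Lemma gpowP n (hn : 3 <= n) (p : Gn n) k : p < mm n -> 0 < k ->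
  val (gpow p k) = (k * p) %% mm n.
Proof.
move=> hp; elim: k => [//|[|k] IH] _.
  by rewrite mul1n modn_small.
rewrite gpowS // val_gop // /opnat -/(mm n) IH // ltn_pmod ?hp; last lia.
by rewrite modnDml mulSn addnC.
Qed.

Lemma gpowH n (hn : 3 <= n) (h : Gn n) k : mm n <= h ->
  (gpow h k == h) || (gpow h k == zz n).
Proof.
move=> hh; have [E h4 h2] := mm_facts hn.
have hl : h < mm n * 2 by rewrite -E.
apply: (gpow_ind (Q := fun x : Gn n => (x == h) || (x == zz n))); first by rewrite eqxx.
move=> x /orP [/eqP -> | /eqP ->]; apply/orP.
  right; apply/eqP/val_inj; rewrite val_gop // /opnat -/(mm n) ltnNge hh /=.
  rewrite -mulnDl.
  have -> : mm n %/ 2 + 1 + (mm n %/ 2 - 1) = mm n by lia.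
  by rewrite modnMr.
left; apply/eqP/val_inj; rewrite val_gop // /opnat -/(mm n) /=.
have -> : 0 < mm n by lia.
rewrite ltnNge hh /= add0n -{1}(subnK hh) modnDr modn_small ?subnK //; lia.
Qed.

Lemma gpowPP n (hn : 3 <= n) (p : Gn n) k : p < mm n -> gpow p k < mm n.
Proof.
move=> hp; have [E h4 h2] := mm_facts hn.
apply: (gpow_ind (Q := fun x : Gn n => x < mm n)) => // x hx.
rewrite val_gop // /opnat -/(mm n) hx hp ltn_pmod //; lia.
Qed.

Lemma adj_sym n (u v : Gn n) : power_adj u v = power_adj v u.
Proof.
rewrite /power_adj eq_sym; congr (_ && _); apply: pb_eq.
split => [[k [k0 [e|e]]]|[k [k0 [e|e]]]]; exists k; tauto.
Qed.

Lemma adj0 n (hn : 3 <= n) (v : Gn n) : v != zz n -> power_adj (zz n) v.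
Proof.
move=> ne; rewrite /power_adj eq_sym ne /=; apply/pbP.
have [E h4 h2] := mm_facts hn.
case: (ltnP v (mm n)) => hv.
  exists (mm n); split; first lia; right; apply/val_inj.
  rewrite gpowP //=; last lia.
  exact: modnMr.
exists 2; split => //; right; apply/val_inj.
rewrite /= val_gop // /opnat -/(mm n) ltnNge hv /= -mulnDl.
have -> : mm n %/ 2 + 1 + (mm n %/ 2 - 1) = mm n by lia.
by rewrite modnMr.
Qed.

Lemma adjH n (hn : 3 <= n) (h v : Gn n) : mm n <= h -> power_adj h v -> v = zz n.
Proof.
move=> hh; rewrite /power_adj => /andP [ne /pbP [k [k0 [e|e]]]].
  by move: (gpowH hn k hh); rewrite e eq_sym (negbTE ne) => /eqP.
case: (ltnP v (mm n)) => hv.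
  by move: (gpowPP hn k hv); rewrite e ltnNge hh.
move: (gpowH hn k hv); rewrite e (negbTE ne) /= => /eqP hz.
have [E h4 h2] := mm_facts hn; by move: hh; rewrite hz /=; lia.
Qed.

Lemma adjPP n (hn : 3 <= n) (p v : Gn n) : p < mm n -> p != zz n ->
  power_adj p v -> v < mm n.
Proof.
move=> hp pz; rewrite /power_adj => /andP [ne /pbP [k [k0 [e|e]]]].
  by rewrite -e gpowPP.
rewrite ltnNge; apply/negP => hv.
move: (gpowH hn k hv); rewrite e (negbTE ne) /=; exact/negP.
Qed.

Definition wit n (u : Gn n) : Gn n :=
  insubd (zz n) (if val u == mm n then (mm n).+1 else mm n).

Lemma wit_facts n (hn : 3 <= n) (u : Gn n) :
  [/\ wit u != u, wit u != zz n & mm n <= wit u].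
Proof.
have [E h4 h2] := mm_facts hn.
have hv : val (wit u) = (if val u == mm n then (mm n).+1 else mm n).
  rewrite /wit val_insubd; have -> : (if val u == mm n then (mm n).+1 else mm n) < 2 ^ n by case: eqP; lia.
  done.
split.
- apply/eqP => /(congr1 val); rewrite hv /=; case: eqP => [->|]; [lia|]. move=> h1 h3; apply: h1; by rewrite h3.
- apply/eqP => /(congr1 val); rewrite hv /=; case: eqP; lia.
- rewrite hv; case: eqP; lia.
Qed.

Lemma dist_G n (hn : 3 <= n) (u v : Gn n) :
  dist (@power_adj n) u v =
  if u == v then 0 else if power_adj u v then 1 else 2.
Proof.
have [E h4 h2] := mm_facts hn.
apply: dist_small.
  rewrite card_ord E; lia.

move=> x y ne nadj.
have xz : x != zz n.
  apply/eqP => ex; move: (nadj) (ne); rewrite ex eq_sym => /negP H1 H2; exact: H1 (adj0 hn H2).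
have yz : y != zz n.
  apply/eqP => ey; move: (nadj) (ne); rewrite ey adj_sym => /negP H1 H2; exact: H1 (adj0 hn H2).
apply/existsP; exists (zz n); rewrite adj_sym adj0 //=; apply/existsP; exists y; rewrite adj0 // eqxx.
by [].
Qed.

Lemma nadj_wit n (hn : 3 <= n) (u : Gn n) : u != zz n -> ~~ power_adj u (wit u).
Proof.
move=> uz; have [_ _ hw] := wit_facts hn u.
apply/negP; rewrite adj_sym => /(adjH hn hw) /eqP; exact/negP.
Qed.

Lemma ecc_G n (hn : 3 <= n) (v : Gn n) :
  ecc (@power_adj n) v = if v == zz n then 1 else 2.
Proof.
have [w1 w2 w3] := wit_facts hn v.
apply/eqP; rewrite eqn_leq; apply/andP; split.
  apply/bigmax_leqP => u _; rewrite dist_G //.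
  case: eqP => [->|ne]; first by case: ifP.
  case: eqP => [ez|_]; last by case: ifP.
  have uz : u != zz n by apply/eqP => e; apply: ne; rewrite ez e.
  by rewrite ez adj0.
case: eqP => [ez|nz].
  apply: leq_trans (leq_bigmax (wit v)); rewrite dist_G // eq_sym (negbTE w1) ez adj0 //.
  by rewrite -ez.
apply: leq_trans (leq_bigmax (wit v)); rewrite dist_G // eq_sym (negbTE w1).
by rewrite (negbTE (nadj_wit hn (introN eqP nz))).
Qed.

Lemma radius_G n (hn : 3 <= n) : radius (@power_adj n) = 1.
Proof.
have [E h4 h2] := mm_facts hn.
apply/eqP; rewrite eqn_leq; apply/andP; split.
  by apply: leq_trans (bigmin_le _ _ (zz n)) _; rewrite ecc_G // eqxx.
apply: bigmin_ge; first by rewrite card_ord E; lia.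
by move=> i; rewrite ecc_G //; case: ifP.
Qed.

Lemma deg_G n (hn : 3 <= n) (v : Gn n) : v != zz n ->
  deg (@power_adj n) v <= (mm n).-1.
Proof.
move=> vz; have [E h4 h2] := mm_facts hn.
rewrite /deg; case: (ltnP v (mm n)) => hv.
  have hle : mm n <= 2 ^ n by rewrite E; lia.
  have S1 : [set x : Gn n | x < mm n] \subset
            [set widen_ord hle x | x in 'I_(mm n)].
    apply/subsetP => x; rewrite inE => hx; apply/imsetP.
    exists (Ordinal hx) => //; exact: val_inj.
  have C1 := leq_trans (subset_leq_card S1) (leq_imset_card _ _).
  rewrite card_ord in C1.
  have S2 : [set x | power_adj v x] \subset [set x : Gn n | x < mm n] :\ v.
    apply/subsetP => x; rewrite !inE => hx; apply/andP; split.
      by move: hx; rewrite /power_adj eq_sym => /andP [].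
    exact: (adjPP hn hv vz hx).
  apply: leq_trans (subset_leq_card S2) _.
  move: C1; rewrite (cardsD1 v) inE hv /=; lia.
have S : [set x | power_adj v x] \subset [set zz n].
  apply/subsetP => x; rewrite !inE => hx; apply/eqP; exact: (adjH hn hv hx).
apply: leq_trans (subset_leq_card S) _; rewrite cards1; lia.
Qed.

Theorem mainTheorem12 (n : nat) (hn : 3 <= n) :
  interior_set (@power_adj n) = center_set (@power_adj n) /\
  (forall h : rel (Gn n),
     closure_seq (@power_adj n) h <-> h =2 @power_adj n).
Proof.
have [E h4 h2] := mm_facts hn.
have nocl : forall u v, ~~ closure_pair (@power_adj n) u v.
  move=> u v; rewrite /closure_pair; apply/negP => /and3P [ne na hd].
  have uz : u != zz n.
    apply/eqP => e; move: na; rewrite e adj0 //; rewrite -e eq_sym //.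
  have vz : v != zz n.
    apply/eqP => e; move: na; rewrite e adj_sym adj0 //; rewrite -e //.
  move: hd (deg_G hn uz) (deg_G hn vz); rewrite card_ord; lia.
split.
  apply/setP => v; rewrite !inE ecc_G // radius_G //.
  case: (eqVneq v (zz n)) => [->|vz] /=.
    apply/forallP => u; apply/implyP => uz.
    have [w1 w2 w3] := wit_facts hn u.
    apply/existsP; exists (wit u); rewrite w2 /= !dist_G //.
    rewrite [u == wit u]eq_sym (negbTE w1) (negbTE (nadj_wit hn uz)) (negbTE uz) adj_sym adj0 //.
    by rewrite [zz n == wit u]eq_sym (negbTE w2) adj0.
  apply/negP => /forallP /(_ (zz n)) /implyP; rewrite eq_sym => /(_ vz).
  case/existsP => w /andP [wv]; rewrite !dist_G //.
  rewrite [zz n == v]eq_sym (negbTE vz).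
  have -> : (v == w) = false by apply/negbTE; rewrite eq_sym.
  have -> : power_adj (zz n) v = true by apply: adj0.
  case: (zz n =P w) => [_|wz]; first by case: (power_adj v w).
  rewrite adj0 //; first by case: (power_adj v w).
  by apply/eqP => e; apply: wz; rewrite e.
move=> h; split.
  move=> H; inversion H as [g h0 Hn e E1 E2 | g h0 u v cp Hc E1 E2]; subst.
    exact: e.
  by move: (nocl u v); rewrite cp.
by move=> e; apply: cl_stop.
Qed.
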